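(* Let $T$ be a tree of order $n(T)\geq 3$ with $l(T)$ leaves, and suppose $(T,S)\in\mathscr{T}_1$ for some labeling $S=(S_A,S_B,S_C,S_D)$. Then $\gamma^{d}_2(T)=|S_A|=\frac{n(T)-l(T)+3}{4}$, and $S_A$ is the unique $\gamma^{d}_2$-set of $T$.
   Context: Graphs are finite and simple. For a vertex $v$ of a graph $G$, $N(v)$ is its open neighborhood, $N[v]=N(v)\cup\{v\}$, $d(v)=|N(v)|$, and $d(u,v)$ denotes distance. A leaf is a vertex of degree $1$; a support vertex is a vertex adjacent to a leaf. For a tree $T$, $l(T)$ and $s(T)$ denote the numbers of leaves and of support vertices, and $n(T)$ its order. A set $D\subseteq V(G)$ is a disjunctive dominating set ($2DD$-set) of $G$ if every vertex $v\notin D$ either has a neighbor in $D$ or has at least two vertices of $D$ at distance exactly $2$ from it. The disjunctive domination number $\gamma^{d}_2(G)$ is the minimum size of a $2DD$-set; a $2DD$-set of that size is a $\gamma^d_2$-set. Labeled trees: a labeling of a tree $T$ is a partition $S=(S_A,S_B,S_C,S_D)$ of $V(T)$ into four (possibly empty) sets; the status $\mathrm{sta}(v)\in\{A,B,C,D\}$ is the letter $x$ with $v\in S_x$. Operation $\mathscr{O}_1$: choose a vertex $v$ with $\mathrm{sta}(v)=A$; add a new vertex $u$ and the edge $uv$, with $\mathrm{sta}(u)=C$. Operation $\mathscr{O}_3$: choose a vertex $v$ with $\mathrm{sta}(v)=C$ and $d(v)=1$; add a new path $u_1u_2u_3u_4$ and the edge $u_1v$, with $\mathrm{sta}(u_1)=D$,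 $\mathrm{sta}(u_2)=B$, $\mathrm{sta}(u_3)=A$, $\mathrm{sta}(u_4)=C$. (Existing vertices keep their statuses.) $\mathscr{T}_1$ is the smallest family of labeled trees that contains $(P_3,S')$, where $S'$ gives both leaves of $P_3$ status $C$ and the central vertex status $A$, and is closed under $\mathscr{O}_1$ and $\mathscr{O}_3$. *)

(* Defs.v *)
From HB Require Import structures.
From mathcomp Require Import all_boot.
Set Implicit Arguments. Unset Strict Implicit. Unset Printing Implicit Defensive.

Inductive status := stA | stB | stC | stD.

Definition status_eqb (x y : status) : bool :=
  match x, y with
  | stA, stA | stB, stB | stC, stC | stD, stD => true
  | _, _ => false end.

Lemma status_eqP : Equality.axiom status_eqb.
Proof. by case; case; constructor. Qed.

HB.instance Definition _ := hasDecEq.Build status status_eqP.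

Section Graphs.
Variables (V : finType) (e : rel V).

Definition simple_graph : Prop := symmetric e /\ irreflexive e.

Definition dist2 (u v : V) : bool :=
  [&& u != v, ~~ e u v & [exists w, e u w && e w v]].

Definition is2DD (D : {set V}) : bool :=
  [forall v, (v \notin D) ==>
     ([exists w in D, e v w] || (1 < #|[set w in D | dist2 v w]|))].

(* Disjunctive domination number (setT is always a 2DD-set). *)
Definition gamma2d : nat :=
  #|[arg min_(D < [set: V] | is2DD D) #|D|]|.

Definition is_gamma2d_set (D : {set V}) : bool := is2DD D && (#|D| == gamma2d).

Definition nleaves : nat := #|[set v | #|[set w | e v w]| == 1]|.

(* Construction of the family T_1, realised inside the fixed graph (V,e)
   with labeling lab: built X means that the subtree induced on X,
   labeled by lab, is obtained from the labeled P_3 by operations O1, O3. *)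
Variable lab : V -> status.

Inductive built : {set V} -> Prop :=
| built_base (a b c : V) :
    a != b -> b != c -> a != c ->
    e a b -> e b c -> ~~ e a c ->
    lab a = stC -> lab b = stA -> lab c = stC ->
    built [set a; b; c]
| built_O1 (X : {set V}) (v u : V) :
    built X -> v \in X -> lab v = stA ->
    u \notin X -> e u v -> (forall w, w \in X -> e u w -> w = v) ->
    lab u = stC ->
    built (u |: X)
| built_O3 (X : {set V}) (v u1 u2 u3 u4 : V) :
    built X -> v \in X -> lab v = stC ->
    #|[set w in X | e v w]| = 1 ->
    u1 \notin X -> u2 \notin X -> u3 \notin X -> u4 \notin X ->
    uniq [:: u1; u2; u3; u4] ->
    e u1 v -> e u1 u2 -> e u2 u3 -> e u3 u4 ->
    (forall w, w \in X -> e u1 w -> w = v) ->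
    (forall w, w \in X -> ~~ e u2 w) ->
    (forall w, w \in X -> ~~ e u3 w) ->
    (forall w, w \in X -> ~~ e u4 w) ->
    ~~ e u1 u3 -> ~~ e u1 u4 -> ~~ e u2 u4 ->
    lab u1 = stD -> lab u2 = stB -> lab u3 = stA -> lab u4 = stC ->
    built (u1 |: (u2 |: (u3 |: (u4 |: X)))).

Definition in_T1 : Prop := built [set: V].

Definition S_of (x : status) : {set V} := [set v | lab v == x].

End Graphs.

(* Main.v *)
Require Import Defs.
From HB Require Import structures.
From mathcomp Require Import all_boot.
From mathcomp Require Import zify.
Set Implicit Arguments. Unset Strict Implicit. Unset Printing Implicit Defensive.

Section Proof.
Variables (V : finType) (e : rel V) (lab : V -> status).
Hypothesis esym : symmetric e.
Hypothesis eirr : irreflexive e.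

Definition d2 (X : {set V}) x y : Prop :=
  [/\ x != y, ~~ e x y & exists2 m, m \in X & e x m && e m y].

Definition dom (X D : {set V}) : Prop :=
  D \subset X /\ forall x, x \in X -> x \notin D ->
   (exists2 w, w \in D & e x w) \/
   (exists y1 y2, [/\ y1 \in D, y2 \in D, y1 != y2, d2 X x y1 & d2 X x y2]).

Definition SA (X : {set V}) := [set x in X | lab x == stA].
Definition deg (X : {set V}) x := #|[set y in X | e x y]|.
Definition lvs (X : {set V}) := [set x in X | deg X x == 1].

Definition okp a b := match a, b with
  stA, stC | stC, stA | stA, stB | stB, stA | stC, stD | stD, stC
  | stD, stB | stB, stD => true | _, _ => false end.

Record Inv (X : {set V}) : Prop := MkInv {
  iE : forall x y, x \in X -> y \in X -> e x y -> okp (lab x) (lab y);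
  iCex : forall c, c \in X -> lab c = stC -> exists2 a, a \in X & e c a && (lab a == stA);
  iC1 : forall c a1 a2, c \in X -> lab c = stC -> a1 \in X -> a2 \in X ->
        e c a1 -> e c a2 -> lab a1 = stA -> lab a2 = stA -> a1 = a2;
  iAC : forall a, a \in X -> lab a = stA -> exists2 c, c \in X & e a c && (lab c == stC);
  iAdeg : forall a, a \in X -> lab a = stA -> 2 <= deg X a;
  icnt : 4 * #|SA X| + #|lvs X| = #|X| + 3;
  idom : dom X (SA X);
  imin : forall D, dom X D -> #|SA X| <= #|D| /\ (#|D| = #|SA X| -> D = SA X) }.

Lemma memlvs (X : {set V}) y : (y \in lvs X) = (y \in X) && (deg X y == 1).
Proof. by rewrite /lvs in_set. Qed.

Lemma memSA (X : {set V}) y : (y \in SA X) = (y \in X) && (lab y == stA).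
Proof. by rewrite /SA in_set. Qed.

Lemma setU1_idV (x : V) (A : {set V}) : x \in A -> x |: A = A.
Proof. by move=> h; apply/setUidPr; rewrite sub1set. Qed.

Lemma memNb (X : {set V}) x y : (y \in [set z in X | e x z]) = (y \in X) && e x y.
Proof. by rewrite in_set. Qed.

Lemma ar1 a b c : 4*a + b.+1 = c + 3 -> 4*(a+1) + (b+1) = c + 4 + 3.
Proof. lia. Qed.
Lemma ar2 x y z : x + y = z -> 0 < y -> x < z.
Proof. lia. Qed.
Lemma ar3 w x y z : w <= x + 1 -> x + y = z -> 2 <= y -> w < z.
Proof. lia. Qed.
Lemma ar4 s z d : s < z -> z < d -> s + 1 < d.
Proof. lia. Qed.

Lemma d2_mono (X X' : {set V}) x y : X \subset X' -> d2 X x y -> d2 X' x y.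
Proof.
move=> sXX' [h1 h2 [m hm hm2]]; split=> //; exists m => //.
exact: (subsetP sXX').
Qed.

Lemma deg_mono (X X' : {set V}) x : X \subset X' -> deg X x <= deg X' x.
Proof.
move=> s; apply: subset_leq_card; apply/subsetP=> y; rewrite !inE.
by case/andP=> /(subsetP s) -> ->.
Qed.

Lemma strict_min (X D : {set V}) : Inv X -> dom X D -> D != SA X -> #|SA X| < #|D|.
Proof.
move=> I hD hne.
have hm := imin I.
have [h1 h2] := hm D hD.
rewrite ltn_neqAle h1 andbT; apply/eqP=> h.
by move/eqP: hne; apply; apply: h2.
Qed.


Lemma single_dom (X : {set V}) x z : dom X [set x] -> z \in X -> z != x -> e z x.
Proof.
move=> [_ h] zX zx; have := h z zX; rewrite inE (negbTE zx) => /(_ isT).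
case=> [[w]|[y1 [y2 [hy1 hy2 hne _ _]]]].
  by rewrite inE => /eqP ->.
by move: hy1 hy2 hne; rewrite !inE => /eqP -> /eqP ->; rewrite eqxx.
Qed.

Lemma dom_card1 (X D : {set V}) z : dom X D -> z \in X -> 0 < #|D|.
Proof.
move=> [_ h] zX; rewrite card_gt0; apply/set0Pn.
case: (boolP (z \in D)) => [zD|zD]; first by exists z.
case: (h z zX zD) => [[w wD _]|[y1 [y2 [hy1 _ _ _ _]]]]; [by exists w | by exists y1].
Qed.

Lemma mem3 (a b c x : V) : x \in [set a; b; c] -> [\/ x = a, x = b | x = c].
Proof.
rewrite !inE; case/orP=> [/orP [] /eqP ->|/eqP ->]; by [apply: Or31|apply: Or32|apply: Or33].
Qed.

Lemma dom_SA_one (X D : {set V}) x :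
  #|D| = 1 -> dom X D -> x \in D -> D = [set x].
Proof.
move=> h1 _ xD; move/eqP: h1 => /cards1P [y Dy]; move: xD; rewrite Dy inE => /eqP ->.
by [].
Qed.

Lemma nbr2 (X : {set V}) x a b : a != b ->
  (forall y, y \in X -> e x y -> y = a \/ y = b) -> a \in X -> b \in X -> e x a -> e x b ->
  deg X x = 2.
Proof.
move=> nab hn aX bX xa xb; have c2 := cards2 a b; rewrite nab in c2.
rewrite /deg -c2; apply: eq_card => y.
rewrite in_set !inE; apply/andP/orP => [[yX h]|[] /eqP ->]; last by split.
  by case: (hn y yX h) => ->; rewrite eqxx; [left|right].
by split.
Qed.

Lemma nbr1 (X : {set V}) x a :
  (forall y, y \in X -> e x y -> y = a) -> a \in X -> e x a -> deg X x = 1.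
Proof.
move=> hn aX xa; rewrite /deg -(cards1 a); apply: eq_card => y.
rewrite in_set in_set1; apply/andP/eqP => [[yX h]|->]; first exact: hn.
by split.
Qed.

Lemma inv_base a b c : a != b -> b != c -> a != c -> e a b -> e b c -> ~~ e a c ->
  lab a = stC -> lab b = stA -> lab c = stC -> Inv [set a; b; c].
Proof.
move=> nab nbc nac Eab Ebc Nac la lb lc.
have Eba : e b a by rewrite esym.
have Ecb : e c b by rewrite esym.
have Nca : e c a = false by rewrite esym (negbTE Nac).
have Nac' : e a c = false by apply: negbTE.
have Eaa := eirr a; have Ebb := eirr b; have Ecc := eirr c.
have nba : b != a by rewrite eq_sym.
have ncb : c != b by rewrite eq_sym.
have nca : c != a by rewrite eq_sym.
have c3 : #|[set a; b; c]| = 3.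
  have -> : [set a; b; c] = a |: [set b; c] by apply/setP=> y; rewrite !inE orbA.
  by rewrite cardsU1 !inE (negbTE nab) (negbTE nac) cards2 nbc.
set X := [set a; b; c].
have aX : a \in X by rewrite !inE eqxx.
have bX : b \in X by rewrite !inE eqxx orbT.
have cX : c \in X by rewrite !inE eqxx !orbT.
have Na : [set y in X | e a y] = [set b].
  apply/setP=> y; rewrite inE in_set1; apply/andP/eqP => [[/mem3 [] -> h]|->] //;
  by move: h; rewrite ?Eaa ?Nac'.
have Nc : [set y in X | e c y] = [set b].
  apply/setP=> y; rewrite inE in_set1; apply/andP/eqP => [[/mem3 [] -> h]|->] //;
  by move: h; rewrite ?Ecc ?Nca.
have Nb : [set y in X | e b y] = [set a; c].
  apply/setP=> y; rewrite inE; apply/andP/idP => [[/mem3 [] -> h]|].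
  - by rewrite !inE eqxx.
  - by move: h; rewrite Ebb.
  - by rewrite !inE eqxx orbT.
  - by rewrite in_setU1 in_set1 => /orP [] /eqP ->; split.
have SAX : SA X = [set b].
  apply/setP=> y; rewrite in_set in_set1; apply/andP/eqP => [[/mem3 [] -> h]|->] //;
  try by move: h; rewrite ?la ?lc ?lb.
  by rewrite lb.
have dA : deg X a = 1 by rewrite /deg Na cards1.
have dB : deg X b = 2 by rewrite /deg Nb cards2 nac.
have dC : deg X c = 1 by rewrite /deg Nc cards1.
have domb : dom X [set b].
  split; first by rewrite sub1set.
  move=> x /mem3 [] -> hx; left; exists b; rewrite ?inE ?eqxx //.
  by move: hx; rewrite inE eqxx.
constructor.
- move=> x y /mem3 [] -> /mem3 [] -> h; move: h;
  by rewrite ?Eaa ?Ebb ?Ecc ?Nac' ?Nca ?la ?lb ?lc.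
- move=> x /mem3 [] -> h; try by move: h; rewrite ?lb.
  + by exists b; rewrite // Eab lb.
  + by exists b; rewrite // Ecb lb.
- move=> x a1 a2 /mem3 [] -> h; try by move: h; rewrite lb.
  + move=> /mem3 [] -> /mem3 [] ->; rewrite ?Eaa ?Nac' //;
    by move=> _ _; rewrite ?la ?lc.
  + move=> /mem3 [] -> /mem3 [] ->; rewrite ?Ecc ?Nca //;
    by move=> _ _; rewrite ?la ?lc.
- move=> x /mem3 [] -> h; try by move: h; rewrite ?la ?lc.
  by exists a; rewrite // Eba la.
- move=> x /mem3 [] -> h; try by move: h; rewrite ?la ?lc.
  by rewrite dB.
- have -> : lvs X = [set a; c].
    apply/setP=> y; rewrite in_set in_setU1 in_set1.
    apply/andP/idP => [[/mem3 [] -> h]|/orP [] /eqP ->].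
    + by rewrite eqxx.
    + by move: h; rewrite dB.
    + by rewrite eqxx orbT.
    + by rewrite dA.
    + by rewrite dC.
  rewrite SAX cards1 cards2 nac.
  by rewrite c3.
- by rewrite SAX.
- move=> D hD; rewrite SAX cards1; split; first exact: (dom_card1 hD aX).
  move=> h1; have := dom_card1 hD aX.
  move/eqP: (h1) => /cards1P [x Dx].
  have xX : x \in X by case: hD => /subsetP s _; apply: s; rewrite Dx inE.
  rewrite Dx in hD *.
  case/mem3: xX => xe; subst x => //.
  + by have := single_dom hD cX nca; rewrite Nca.
  + by have := single_dom hD aX nac; rewrite Nac'.
Qed.

Lemma okp_CxA s : okp stC s -> okp s stA -> False.
Proof. by case: s. Qed.

Lemma inv_O1 (X : {set V}) v u : Inv X -> v \in X -> lab v = stA -> u \notin X -> e u v ->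
  (forall w, w \in X -> e u w -> w = v) -> lab u = stC -> Inv (u |: X).
Proof.
move=> I vX lv uX Euv hu lu.
set X' := u |: X.
have memX' y : y \in X' -> y = u \/ y \in X.
  by rewrite in_setU1 => /orP [/eqP ->|]; [left|right].
have XsX' : X \subset X' by apply: subsetUr.
have inX' y : y \in X -> y \in X' by move=> h; rewrite in_setU1 h orbT.
have uX' : u \in X' by rewrite in_setU1 eqxx.
have nbU y : y \in X' -> e u y -> y = v.
  by case/memX' => [->|yX]; [rewrite eirr | apply: hu].
have nbX x : x \in X -> e x u -> x = v by move=> xX; rewrite esym; apply: hu.
have nuv : u != v by apply/eqP=> h; move: uX; rewrite h vX.
have Evu : e v u by rewrite esym.
have SAeq : SA X' = SA X.
  apply/setP=> y; rewrite !in_set; case: (boolP (y == u)) => [/eqP ->|yu].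
    by rewrite lu (negbTE uX) !andbF.
  by rewrite in_set1 (negbTE yu).
have Lkey x y : x \in X -> y \in X -> d2 X' x y -> d2 X x y.
  move=> xX yX [h1 h2 [m mX' /andP [xm my]]]; split=> //.
  case: (memX' m mX') => [mu|mX]; last by exists m => //; rewrite xm.
  subst m; by move: h1; rewrite (nbX x xX xm) (hu y yX my) eqxx.
have lvA y : y \in SA X -> y \in X /\ lab y = stA by rewrite in_set => /andP [-> /eqP].
have degv : 2 <= deg X v := iAdeg I vX lv.
have degv' : 2 <= deg X' v := leq_trans degv (deg_mono v XsX').
constructor.
- move=> x y /memX' [->|xX] /memX' [->|yX] h.
  + by rewrite eirr in h.
  + by rewrite (hu y yX h) lu lv.
  + by rewrite (nbX x xX h) lu lv.
  + exact: (iE I xX yX h).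
- move=> c /memX' [->|cX] lc.
  + by exists v; rewrite ?inX' // Euv lv.
  + by have [a aX ha] := iCex I cX lc; exists a; rewrite ?inX'.
- move=> c a1 a2 /memX' [->|cX] lc.
  + by move=> a1X a2X h1 h2 _ _; rewrite (nbU a1 a1X h1) (nbU a2 a2X h2).
  + move=> /memX' [->|a1X]; first by move=> _ _ _; rewrite lu.
    move=> /memX' [->|a2X]; first by move=> _ _ _; rewrite lu.
    exact: (iC1 I cX lc a1X a2X).
- move=> a /memX' [->|aX] la; first by rewrite lu in la.
  by have [c cX hc] := iAC I aX la; exists c; rewrite ?inX'.
- move=> a /memX' [->|aX] la; first by rewrite lu in la.
  exact: (leq_trans (iAdeg I aX la) (deg_mono a XsX')).
- have degU : deg X' u = 1.
    rewrite /deg -(cards1 v); apply: eq_card => y.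
    rewrite in_set in_set1; apply/andP/eqP => [[yX h]|->].
    + exact: nbU.
    + by rewrite inX'.
  have degX x : x \in X -> x != v -> deg X' x = deg X x.
    move=> xX xv; apply: eq_card => y; rewrite !in_set.
    case: (boolP (y == u)) => [/eqP ->|yu].
    + rewrite (negbTE uX) /=; apply/negbTE/negP=> /andP [_ h].
      by move: xv; rewrite (nbX x xX h) eqxx.
    + by rewrite in_set1 (negbTE yu).
  have -> : lvs X' = u |: lvs X.
    apply/setP=> y; rewrite in_setU1 !memlvs.
    case: (boolP (y == u)) => [/eqP ->|yu] /=; first by rewrite uX' degU.
    rewrite in_setU1 (negbTE yu) /=.
    case: (boolP (y \in X)) => //= yX.
    case: (boolP (y == v)) => [/eqP ->|yv].
    + by rewrite !gtn_eqF ?degv ?degv' //.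
    + by rewrite degX.
  rewrite SAeq cardsU1 [#|X'|]cardsU1 !in_set (negbTE uX) /=.
  have := icnt I; lia.
- rewrite SAeq; split.
  + apply: subset_trans XsX'; apply/subsetP=> y /lvA [] //.
  + move=> x /memX' [->|xX] xS.
    * by left; exists v => //; rewrite in_set vX lv.
    * case: ((idom I).2 x xX xS) => [h|[y1 [y2 [a1 a2 a3 a4 a5]]]]; first by left.
      right; exists y1, y2; split=> //; exact: (d2_mono XsX').
- rewrite SAeq => D hD.
  have DX' : D \subset X' by case: hD.
  case: (boolP (u \in D)) => uD.
  + set Z := v |: (D :\ u).
    have ZX : Z \subset X.
      apply/subsetP=> y; rewrite in_setU1 in_setD1 => /orP [/eqP ->//|/andP [yu yD]].
      by case: (memX' y (subsetP DX' y yD)) => // h; rewrite h eqxx in yu.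
    have ZD : #|Z| <= #|D|.
      rewrite [#|D|](cardsD1 u) uD cardsU1; by case: (v \in D :\ u).
    have hZ : dom X Z.
      split=> // x xX xZ.
      have xv : x != v by apply/eqP=> h; rewrite h in_setU1 eqxx in xZ.
      have xu : x != u by apply/eqP=> h; rewrite h (negbTE uX) in xX.
      have xD : x \notin D.
        by apply/negP=> h; move: xZ; rewrite in_setU1 in_setD1 xu h orbT.
      have vZ : v \in Z by rewrite in_setU1 eqxx.
      have inZ y : y \in D -> y != u -> y \in Z.
        by move=> yD yu; rewrite in_setU1 in_setD1 yu yD orbT.
      have yX y : y \in D -> y != u -> y \in X.
        by move=> yD yu; apply: (subsetP ZX); apply: inZ.
      have d2u : d2 X' x u -> e x v.
        case=> _ _ [m mX' /andP [xm mu]].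
        case: (memX' m mX') => [mu'|mX]; first by rewrite mu' eirr in mu.
        by rewrite -(nbX m mX mu).
      case: (hD.2 x (inX' x xX) xD) => [[w wD xw]|[y1 [y2 [y1D y2D ne d1 d2']]]].
      * left; exists w => //; apply: inZ => //; apply/eqP=> h; subst w.
        by move: xv; rewrite (nbX x xX xw) eqxx.
      * case: (boolP (y1 == u)) => [/eqP h|y1u]; first by subst y1; left; exists v; rewrite ?d2u.
        case: (boolP (y2 == u)) => [/eqP h|y2u]; first by subst y2; left; exists v; rewrite ?d2u.
        right; exists y1, y2; split; [exact: inZ|exact: inZ|done| |].
        - by apply: Lkey => //; apply: yX.
        - by apply: Lkey => //; apply: yX.
    have [h1 h2] := imin I hZ.
    split; first exact: leq_trans h1 ZD.
    move=> hDS; exfalso.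
    have eZ : #|Z| = #|SA X| by apply/eqP; rewrite eqn_leq h1 andbT -hDS.
    have ZS := h2 eZ.
    have [c cX /andP [vc /eqP lc]] := iAC I vX lv.
    have cv : c != v by apply/eqP=> h; rewrite h lv in lc.
    have cu : c != u by apply/eqP=> h; rewrite -h cX in uX.
    have inZ y : y \in D -> y != u -> y \in SA X.
      by move=> yD yu; rewrite -ZS in_setU1 in_setD1 yu yD orbT.
    have cD : c \notin D.
      by apply/negP=> h; have [_] := lvA c (inZ c h cu); rewrite lc.
    have vD : v \in D -> False.
      move=> vD; move: eZ; rewrite /Z setU1_idV; last by rewrite in_setD1 eq_sym nuv vD.
      rewrite -hDS [#|D|](cardsD1 u) uD /= => h.
      by move/eqP: h; rewrite -{1}[#|D :\ u|]add0n eqn_add2r.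
    case: (hD.2 c (inX' c cX) cD) => [[w wD cw]|[y1 [y2 [y1D y2D ne d1 d2']]]].
    * case: (boolP (w == u)) => [/eqP h|wu].
        by subst w; move: cv; rewrite (nbX c cX cw) eqxx.
      have [wX lw] := lvA w (inZ w wD wu).
      have vw : v = w.
        by apply: (iC1 I cX lc vX wX) => //; rewrite esym.
      by apply: vD; rewrite vw.
    * have [y [yD yu hy]] : exists y, [/\ y \in D, y != u & d2 X' c y].
        case: (boolP (y1 == u)) => [/eqP h|y1u]; last by exists y1.
        by exists y2; split=> //; rewrite -h eq_sym.
      have [yX ly] := lvA y (inZ y yD yu).
      case: hy => _ _ [m mX' /andP [cm my]].
      case: (memX' m mX') => [mu|mX].
        by subst m; move: cv; rewrite (nbX c cX cm) eqxx.
      have := iE I cX mX cm; have := iE I mX yX my; rewrite lc ly => h3 h4.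
      exact: (okp_CxA h4 h3).
  + have DX : D \subset X.
      apply/subsetP=> y yD; case: (memX' y (subsetP DX' y yD)) => // h.
      by rewrite -h yD in uD.
    apply: (imin I); split=> // x xX xD.
    case: (hD.2 x (inX' x xX) xD) => [h|[y1 [y2 [y1D y2D ne d1 d2']]]]; first by left.
    right; exists y1, y2; split=> //; apply: Lkey => //; exact: (subsetP DX).
Qed.

Lemma inv_O3 (X : {set V}) v u1 u2 u3 u4 :
  Inv X -> v \in X -> lab v = stC -> #|[set w in X | e v w]| = 1 ->
  u1 \notin X -> u2 \notin X -> u3 \notin X -> u4 \notin X ->
  uniq [:: u1; u2; u3; u4] ->
  e u1 v -> e u1 u2 -> e u2 u3 -> e u3 u4 ->
  (forall w, w \in X -> e u1 w -> w = v) ->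
  (forall w, w \in X -> ~~ e u2 w) ->
  (forall w, w \in X -> ~~ e u3 w) ->
  (forall w, w \in X -> ~~ e u4 w) ->
  ~~ e u1 u3 -> ~~ e u1 u4 -> ~~ e u2 u4 ->
  lab u1 = stD -> lab u2 = stB -> lab u3 = stA -> lab u4 = stC ->
  Inv (u1 |: (u2 |: (u3 |: (u4 |: X)))).
Proof.
move=> I vX lv degv1 u1X u2X u3X u4X U E1v E12 E23 E34 h1 h2 h3 h4 N13 N14 N24
  l1 l2 l3 l4.
move: U; rewrite /= !inE !negb_or => /andP [/and3P [n12 n13 n14] /andP [/andP [n23 n24] /andP [n34 _]]].
set X' := u1 |: (u2 |: (u3 |: (u4 |: X))).
have nv w : w \notin X -> (v == w) = false.
  by move=> wX; apply/negbTE/eqP=> h; rewrite -h vX in wX.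
have R := (negbTE n12, negbTE n13, negbTE n14, negbTE n23, negbTE n24, negbTE n34,
  negbTE u1X, negbTE u2X, negbTE u3X, negbTE u4X, nv u1 u1X, nv u2 u2X, nv u3 u3X, nv u4 u4X).
have R' := (eq_sym u2 u1, eq_sym u3 u1, eq_sym u4 u1, eq_sym u3 u2, eq_sym u4 u2,
  eq_sym u4 u3, eq_sym u1 v, eq_sym u2 v, eq_sym u3 v, eq_sym u4 v).
have memE y : (y \in X') = (y == u1) || ((y == u2) || ((y == u3) || ((y == u4) || (y \in X)))).
  by rewrite !in_setU1.
have memX' y : y \in X' -> y = u1 \/ y = u2 \/ y = u3 \/ y = u4 \/ y \in X.
  rewrite memE => /orP [/eqP->|/orP [/eqP->|/orP [/eqP->|/orP [/eqP->|]]]];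
  by [left|right;left|right;right;left|do 3 right;left|do 4 right].
have inX' y : y \in X -> y \in X' by move=> h; rewrite memE h !orbT.
have u1X' : u1 \in X' by rewrite memE eqxx.
have u2X' : u2 \in X' by rewrite memE eqxx orbT.
have u3X' : u3 \in X' by rewrite memE eqxx !orbT.
have u4X' : u4 \in X' by rewrite memE eqxx !orbT.
have XsX' : X \subset X' by apply/subsetP=> y; apply: inX'.
have Ev1 : e v u1 by rewrite esym.
have E21 : e u2 u1 by rewrite esym.
have E32 : e u3 u2 by rewrite esym.
have E43 : e u4 u3 by rewrite esym.
have F := (negbTE N13, negbTE N14, negbTE N24, esym u3 u1, esym u4 u1, esym u4 u2,
  eirr u1, eirr u2, eirr u3, eirr u4).
have Nb1 y : y \in X' -> e u1 y -> y = v \/ y = u2.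
  case/memX' => [->|[->|[->|[->|yX]]]]; rewrite ?F //; [by right|by left; apply: h1].
have Nb2 y : y \in X' -> e u2 y -> y = u1 \/ y = u3.
  case/memX' => [->|[->|[->|[->|yX]]]]; rewrite ?F //; [by left|by right|].
  by rewrite (negbTE (h2 y yX)).
have Nb3 y : y \in X' -> e u3 y -> y = u2 \/ y = u4.
  case/memX' => [->|[->|[->|[->|yX]]]]; rewrite ?F //; [by left|by right|].
  by rewrite (negbTE (h3 y yX)).
have Nb4 y : y \in X' -> e u4 y -> y = u3.
  case/memX' => [->|[->|[->|[->|yX]]]]; rewrite ?F //.
  by rewrite (negbTE (h4 y yX)).
have NbX x y : x \in X -> y \in X' -> e x y -> y \in X \/ (x = v /\ y = u1).
  move=> xX; case/memX' => [->|[->|[->|[->|yX]]]] h; try by left.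
  - by right; split=> //; apply: h1 => //; rewrite esym.
  - by move: (h2 x xX); rewrite esym h.
  - by move: (h3 x xX); rewrite esym h.
  - by move: (h4 x xX); rewrite esym h.
have [p pX /andP [vp /eqP lp]] := iCex I vX lv.
have Nvp y : y \in X -> e v y -> y = p.
  move=> yX vy; move/eqP: degv1 => /cards1P [q hq].
  have : y \in [set w in X | e v w] by rewrite memNb yX vy.
  have : p \in [set w in X | e v w] by rewrite memNb pX vp.
  by rewrite hq !in_set1 => /eqP -> /eqP ->.
have pu1 : p != u1 by apply/eqP=> h; rewrite -h pX in u1X.
have SAeq : SA X' = u3 |: SA X.
  apply/setP=> y; rewrite in_setU1 !memSA memE.
  have [->|y1] := eqVneq y u1; first by rewrite /= ?R l1.
  have [->|y2] := eqVneq y u2; first by rewrite /= ?R ?R' l2.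
  have [->|y3] := eqVneq y u3; first by rewrite /= ?R ?R' l3.
  have [->|y4] := eqVneq y u4; first by rewrite /= ?R ?R' l4.
  by [].
have dX x : x \in X -> x != v -> deg X' x = deg X x.
  move=> xX xv; apply: eq_card => y; rewrite !memNb.
  apply/andP/andP => [[yX' h]|[yX h]]; last by split=> //; apply: inX'.
  case: (NbX x y xX yX' h) => [yX|[xv' _]]; first by [].
  by rewrite xv' eqxx in xv.
have dv : deg X' v = 2.
  apply: (nbr2 pu1) => //; try exact: inX'.
  move=> y yX' h; case: (NbX v y vX yX' h) => [yX|[_ ->]]; last by right.
  by left; apply: Nvp.
have d1 : deg X' u1 = 2.
  apply: (nbr2 (a := v) (b := u2)) => //; first by rewrite ?R.
  exact: inX'.
have d2x : deg X' u2 = 2.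
  by apply: (nbr2 (a := u1) (b := u3)) => //; rewrite ?R.
have d3 : deg X' u3 = 2.
  by apply: (nbr2 (a := u2) (b := u4)) => //; rewrite ?R.
have d4 : deg X' u4 = 1 by apply: (nbr1 (a := u3)).
have dvX : deg X v = 1 by [].
constructor.
- move=> x y; case/memX' => [->|[->|[->|[->|xX]]]] yX' h.
  + by case: (Nb1 y yX' h) => ->; rewrite l1 ?lv ?l2.
  + by case: (Nb2 y yX' h) => ->; rewrite l2 ?l1 ?l3.
  + by case: (Nb3 y yX' h) => ->; rewrite l3 ?l2 ?l4.
  + by rewrite (Nb4 y yX' h) l4 l3.
  + case: (NbX x y xX yX' h) => [yX|[-> ->]]; last by rewrite lv l1.
    exact: (iE I xX yX h).
- move=> c; case/memX' => [->|[->|[->|[->|cX]]]] lc; rewrite ?l1 ?l2 ?l3 // in lc.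
  + by exists u3 => //; rewrite E43 l3.
  + by have [a aX ha] := iCex I cX lc; exists a; rewrite ?inX'.
- move=> c a1 a2; case/memX' => [->|[->|[->|[->|cX]]]] lc; rewrite ?l1 ?l2 ?l3 // in lc.
  + by move=> a1X a2X ea1 ea2 _ _; rewrite (Nb4 a1 a1X ea1) (Nb4 a2 a2X ea2).
  + move=> a1X a2X ea1 ea2 la1 la2.
    case: (NbX c a1 cX a1X ea1) => [a1X'|[_ h]]; last by rewrite h l1 in la1.
    case: (NbX c a2 cX a2X ea2) => [a2X'|[_ h]]; last by rewrite h l1 in la2.
    exact: (iC1 I cX lc a1X' a2X').
- move=> a; case/memX' => [->|[->|[->|[->|aX]]]] la; rewrite ?l1 ?l2 ?l4 // in la.
  + by exists u4 => //; rewrite E34 l4.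
  + by have [c cX hc] := iAC I aX la; exists c; rewrite ?inX'.
- move=> a; case/memX' => [->|[->|[->|[->|aX]]]] la; rewrite ?l1 ?l2 ?l4 // in la.
  + by rewrite d3.
  + exact: (leq_trans (iAdeg I aX la) (deg_mono a XsX')).
- have -> : lvs X' = u4 |: (lvs X :\ v).
    apply/setP=> y; rewrite in_setU1 in_setD1 !memlvs memE.
    have [->|y1] := eqVneq y u1; first by rewrite /= ?eqxx ?R ?R' ?R d1.
    have [->|y2] := eqVneq y u2; first by rewrite /= ?eqxx ?R ?R' ?R d2x.
    have [->|y3] := eqVneq y u3; first by rewrite /= ?eqxx ?R ?R' ?R d3.
    have [->|y4] := eqVneq y u4; first by rewrite /= ?eqxx ?R ?R' ?R d4.
    rewrite /=.
    have [->|yv] := eqVneq y v; first by rewrite dv vX.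
    case: (boolP (y \in X)) => //= yX.
    by rewrite dX.
  have vL : v \in lvs X by rewrite memlvs vX dvX.
  have cL := cardsD1 v (lvs X); rewrite vL in cL.
  have cX' : #|X'| = #|X| + 4.
    rewrite /X' !cardsU1 !in_setU1 ?R /=.
    by rewrite !add1n addn4.
  have cl : #|u4 |: (lvs X :\ v)| = #|lvs X :\ v| + 1.
    by rewrite cardsU1 in_setD1 memlvs (negbTE u4X) andbF addnC.
  have cs : #|u3 |: SA X| = #|SA X| + 1.
    by rewrite cardsU1 memSA (negbTE u3X) addnC.
  rewrite SAeq cX' cl cs.
  have := icnt I; rewrite cL add1n.
  move: #|SA X| #|lvs X :\ v| #|X| => a b c.
  exact: ar1.
- rewrite SAeq; split.
  + apply/subsetP=> y; rewrite in_setU1 memSA => /orP [/eqP ->//|/andP [yX _]].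
    exact: inX'.
  + move=> x; case/memX' => [->|[->|[->|[->|xX]]]]; rewrite in_setU1 ?eqxx //.
    * move=> _; right; exists u3, p; split.
      -- by rewrite in_setU1 eqxx.
      -- by rewrite in_setU1 memSA pX lp orbT.
      -- by apply/eqP=> h; rewrite -h in pX; rewrite pX in u3X.
      -- by split; rewrite ?R ?N13 //; exists u2; rewrite ?E12.
      -- split; first by rewrite eq_sym.
         ++ by apply/negP=> h; move: lp; rewrite (h1 p pX h) lv.
         ++ by exists v; rewrite ?inX' ?E1v.
    * by move=> _; left; exists u3; rewrite ?in_setU1 ?eqxx.
    * by move=> _; left; exists u3; rewrite ?in_setU1 ?eqxx.
    * rewrite memSA negb_or xX /= => /andP [_ xS].
      have xS' : x \notin SA X by rewrite memSA xX.
      case: ((idom I).2 x xX xS') => [[w wS xw]|[y1 [y2 [a1 a2 a3 a4 a5]]]].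
      -- by left; exists w; rewrite ?in_setU1 ?wS ?orbT.
      -- right; exists y1, y2; split; rewrite ?in_setU1 ?a1 ?a2 ?orbT //;
         exact: (d2_mono XsX').
- rewrite SAeq => D hD.
  have DX' : D \subset X' by case: hD.
  have inD' y : y \in D -> y \in X' by apply: (subsetP DX').
  have hD2 := hD.2.
  have F4 : u3 \in D \/ u4 \in D.
    case: (boolP (u4 \in D)) => [|u4D]; [by right|left].
    case: (hD2 u4 u4X' u4D) => [[w wD ew]|[y1 [y2 [y1D y2D ne da db]]]].
      by rewrite -(Nb4 w (inD' w wD) ew).
    have k y : y \in X' -> d2 X' u4 y -> y = u2.
      move=> yX' [hne _ [m mX' /andP [em my]]].
      move: my; rewrite (Nb4 m mX' em) => my.
      case: (Nb3 y yX' my) => // h; by rewrite h eqxx in hne.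
    by move: ne; rewrite (k y1 (inD' y1 y1D) da) (k y2 (inD' y2 y2D) db) eqxx.
  have F2 : u1 \notin D -> u2 \notin D -> u3 \notin D -> v \in D /\ u4 \in D.
    move=> u1D u2D u3D.
    case: (hD2 u2 u2X' u2D) => [[w wD ew]|[y1 [y2 [y1D y2D ne da db]]]].
      by case: (Nb2 w (inD' w wD) ew) => h; [move: u1D|move: u3D]; rewrite -h wD.
    have k y : y \in X' -> d2 X' u2 y -> y = v \/ y = u4.
      move=> yX' [hne _ [m mX' /andP [em my]]].
      case: (Nb2 m mX' em) => h; rewrite h in my.
      - case: (Nb1 y yX' my) => h'; [by left|by rewrite h' eqxx in hne].
      - case: (Nb3 y yX' my) => h'; [by rewrite h' eqxx in hne|by right].
    case: (k y1 (inD' y1 y1D) da) => h; case: (k y2 (inD' y2 y2D) db) => h';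
      subst y1 y2; rewrite ?eqxx // in ne; by split.
  have SAc : #|u3 |: SA X| = #|SA X| + 1.
    by rewrite cardsU1 memSA (negbTE u3X) /= addnC.
  rewrite SAc.
  case: (boolP [&& v \notin D, u1 \notin D, u2 \notin D & u4 \notin D]).
  + case/and4P => vD u1D u2D u4D.
    have u3D : u3 \in D by case: F4 => //; rewrite (negbTE u4D).
    set Z := D :&: X.
    have DZ : D = u3 |: Z.
      apply/setP=> y; rewrite in_setU1 in_setI.
      case: (boolP (y \in D)) => yD /=.
      - case: (memX' y (inD' y yD)) => [h|[h|[->|[h|->]]]]; rewrite ?eqxx ?orbT //.
        + by move: u1D; rewrite -h yD.
        + by move: u2D; rewrite -h yD.
        + by move: u4D; rewrite -h yD.
      - rewrite orbF; symmetry; apply: negbTE; apply/eqP=> h; by rewrite h u3D in yD.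
    have cD : #|D| = #|Z| + 1.
      by rewrite DZ cardsU1 in_setI (negbTE u3X) andbF addnC.
    have hZ : dom X Z.
      split; first exact: subsetIr.
      move=> x xX xZ.
      have xD : x \notin D by move: xZ; rewrite in_setI xX andbT.
      case: (hD2 x (inX' x xX) xD) => [[w wD xw]|[y1 [y2 [y1D y2D ne da db]]]].
      * case: (NbX x w xX (inD' w wD) xw) => [wX|[_ h]]; last by move: u1D; rewrite -h wD.
        by left; exists w; rewrite ?in_setI ?wD.
      * have k y : y \in D -> d2 X' x y -> y \in Z /\ d2 X x y.
          move=> yD [hne hne2 [m mX' /andP [xm my]]].
          case: (NbX x m xX mX' xm) => [mX|[xv mu]].
          - case: (NbX m y mX (inD' y yD) my) => [yX|[_ h]]; last by move: u1D; rewrite -h yD.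
            by split; [rewrite in_setI yD yX| split=> //; exists m; rewrite ?xm].
          - rewrite mu in my; case: (Nb1 y (inD' y yD) my) => h.
              by rewrite xv h eqxx in hne.
            by move: u2D; rewrite -h yD.
        have [k1 k2] := k y1 y1D da; have [k3 k4] := k y2 y2D db.
        by right; exists y1, y2; split.
    have [m1 m2] := imin I hZ.
    rewrite cD; split; first by rewrite leq_add2r.
    move=> /eqP; rewrite eqn_add2r => /eqP hz.
    by rewrite DZ (m2 hz).
  + rewrite !negb_and !negbK => hcase.
    set Z := v |: (D :&: X).
    have ZX : Z \subset X.
      by apply/subsetP=> y; rewrite in_setU1 in_setI => /orP [/eqP ->|/andP [_ ->]].
    have vZ : v \in Z by rewrite in_setU1 eqxx.
    have hZ : dom X Z.
      split=> // x xX xZ.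
      have xv : x != v by apply/eqP=> h; rewrite h vZ in xZ.
      have xD : x \notin D.
        by apply/negP=> h; move: xZ; rewrite in_setU1 in_setI h xX orbT.
      case: (hD2 x (inX' x xX) xD) => [[w wD xw]|[y1 [y2 [y1D y2D ne da db]]]].
      * case: (NbX x w xX (inD' w wD) xw) => [wX|[h _]]; last by rewrite h eqxx in xv.
        by left; exists w; rewrite // in_setU1 in_setI wD wX orbT.
      * have k y : y \in D -> d2 X' x y -> e x v \/ (y \in Z /\ d2 X x y).
          move=> yD [hne hne2 [m mX' /andP [xm my]]].
          case: (NbX x m xX mX' xm) => [mX|[h _]]; last by rewrite h eqxx in xv.
          case: (NbX m y mX (inD' y yD) my) => [yX|[mv _]].
          - right; split; first by rewrite in_setU1 in_setI yD yX orbT.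
            by split=> //; exists m; rewrite ?xm.
          - by left; rewrite -mv.
        case: (k y1 y1D da) => [xv'|[k1 k2]]; first by left; exists v.
        case: (k y2 y2D db) => [xv'|[k3 k4]]; first by left; exists v.
        by right; exists y1, y2; split.
    have vS : v \notin SA X by rewrite memSA lv andbF.
    have ZS : Z != SA X by apply/eqP=> h; rewrite -h vZ in vS.
    have sm := strict_min I hZ ZS.
    have cID := cardsID X D.
    have lt : #|Z| < #|D|.
      have two a b : a \in D -> b \in D -> a \notin X -> b \notin X -> a != b ->
          2 <= #|D :\: X|.
        move=> aD bD aX bX ab; have := cards2 a b; rewrite ab => <-.
        apply: subset_leq_card; apply/subsetP=> y; rewrite !inE.
        by case/orP=> /eqP ->; rewrite ?aD ?bD ?aX ?bX.
      case: (boolP (v \in D)) => vD.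
      * have : Z = D :&: X by rewrite /Z setU1_idV // in_setI vD vX.
        move=> ->; have : 0 < #|D :\: X|.
          rewrite card_gt0; apply/set0Pn.
          by case: F4 => h; [exists u3|exists u4]; rewrite in_setD h ?u3X ?u4X.
        by move=> h0; exact: (ar2 cID h0).
      * have cZ : #|Z| <= #|D :&: X| + 1 by rewrite cardsU1 addnC leq_add2l leq_b1.
        suff hh2 : 2 <= #|D :\: X| by exact: (ar3 cZ cID hh2).
        move: hcase; rewrite (negbTE vD) /= => hc.
        case: (boolP (u3 \in D)) => u3D.
        - case/or3P: hc => h.
          + by apply: (two u1 u3); rewrite ?u1X ?u3X ?R.
          + by apply: (two u2 u3); rewrite ?u2X ?u3X ?R.
          + by apply: (two u3 u4); rewrite ?u4X ?u3X ?R.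
        - have u4D : u4 \in D by case: F4 => // h; rewrite h in u3D.
          case: (boolP (u1 \in D)) => u1D.
            by apply: (two u1 u4); rewrite ?u1X ?u4X ?R.
          case: (boolP (u2 \in D)) => u2D.
            by apply: (two u2 u4); rewrite ?u2X ?u4X ?R.
          have [h' _] := F2 u1D u2D u3D.
          by rewrite h' in vD.
    have := ar4 sm lt => hh4.
    split; first exact: ltnW.
    by move=> h; rewrite h ltnn in hh4.
Qed.

Lemma built_inv X : built e lab X -> Inv X.
Proof.
elim=> {X}.
- move=> a b c h1 h2 h3 h4 h5 h6 h7 h8 h9; exact: (inv_base h1 h2 h3 h4 h5 h6 h7 h8 h9).
- move=> X v u _ IH g1 g2 g3 g4 g5 g6; exact: (inv_O1 IH g1 g2 g3 g4 g5 g6).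
- move=> X v u1 u2 u3 u4 _ IH g1 g2 g3 g4 g5 g6 g7 g8 g9 g10 g11 g12 g13 g14 g15 g16 g17 g18
    g19 g20 g21 g22 g23.
  exact: (inv_O3 IH g1 g2 g3 g4 g5 g6 g7 g8 g9 g10 g11 g12 g13 g14 g15 g16 g17 g18 g19 g20 g21 g22 g23).
Qed.

Lemma d2T x y : d2 [set: V] x y <-> dist2 e x y.
Proof.
split.
- case=> h1 h2 [m _ hm]; rewrite /dist2 h1 h2 /=; apply/existsP; by exists m.
- rewrite /dist2 => /and3P [h1 h2 /existsP [m hm]]; split=> //; exists m => //.
Qed.

Lemma domT D : dom [set: V] D <-> is2DD e D.
Proof.
split.
- case=> _ h; apply/forallP=> x; apply/implyP=> xD.
  case: (h x (in_setT x) xD) => [[w wD xw]|[y1 [y2 [y1D y2D ne da db]]]].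
  + by apply/orP; left; apply/existsP; exists w; rewrite wD.
  + apply/orP; right; apply/card_gt1P; exists y1, y2; split=> //; rewrite in_set.
    * by rewrite y1D; apply/d2T.
    * by rewrite y2D; apply/d2T.
- move=> h; split; first exact: subsetT.
  move=> x _ xD; move/forallP: h => /(_ x) /implyP /(_ xD) /orP
    [/existsP [w /andP [wD xw]]|/card_gt1P [y1 [y2 [h1 h2 ne]]]].
  + by left; exists w.
  + right; exists y1, y2; move: h1 h2; rewrite !in_set => /andP [y1D da] /andP [y2D db].
    by split=> //; apply/d2T.
Qed.

End Proof.

Theorem lemma3p2 (V : finType) (e : rel V) (lab : V -> status) :
  simple_graph e ->
  in_T1 e lab ->
  gamma2d e = #|S_of lab stA| /\
  4 * #|S_of lab stA| = #|V| - nleaves e + 3 /\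
  is_gamma2d_set e (S_of lab stA) /\
  (forall D : {set V}, is_gamma2d_set e D -> D = S_of lab stA).
Proof.
move=> [esym eirr] hT.
have I := built_inv esym eirr hT.
have SAe : SA lab [set: V] = S_of lab stA.
  by apply/setP=> y; rewrite memSA /S_of in_set in_setT.
have Lm := imin I; rewrite SAe in Lm.
have Dm := idom I; rewrite SAe in Dm.
have SD : is2DD e (S_of lab stA) by apply/domT.
have Lm' D : is2DD e D -> #|S_of lab stA| <= #|D| /\ (#|D| = #|S_of lab stA| -> D = S_of lab stA).
  by move=> h; apply: Lm; apply/domT.
have gE : gamma2d e = #|S_of lab stA|.
  rewrite /gamma2d; case: arg_minnP; first by apply/forallP=> x; rewrite in_setT.
  move=> D hD hmin; apply/eqP; rewrite eqn_leq (Lm' D hD).1 andbT.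
  exact: hmin.
have nl : nleaves e = #|lvs e [set: V]|.
  apply: eq_card => x; rewrite memlvs in_setT /= in_set.
  congr (_ == 1); apply: eq_card => y; by rewrite memNb in_setT in_set.
have ct := icnt I; rewrite SAe -nl cardsT in ct.
have lV : nleaves e <= #|V| by apply: max_card.
split; first exact: gE.
split; first by move: ct lV; clear; lia.
split; first by rewrite /is_gamma2d_set SD gE eqxx.
move=> D /andP [hD /eqP hc]; apply: (Lm' D hD).2; by rewrite hc gE.
Qed.
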